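(* Let $G$ be a graph with $4\le |V(G)|\le 5$ and $E(G)\ne\emptyset$. Then $\varphi_r(G-v)=\varphi_r(G)+\lfloor |V(G)|/2\rfloor-2$ for every vertex $v\in V(G)$ if and only if $G$ contains two edges with no common endpoint but contains no induced subgraph that is a minimal b-$3$-atom.
   Context: A proper $k$-coloring of $G$ is a surjective map $c:V(G)\to\{1,\ldots,k\}$ with $c(u)\ne c(v)$ for every edge $uv$. In a proper $k$-coloring, a vertex of color $i$ is a b-vertex if it has a neighbor of every color $j\ne i$. A b-$k$-coloring is a proper $k$-coloring in which every color class contains a b-vertex; $\varphi(G)$ is the largest $k$ such that $G$ has a b-$k$-coloring, and $\varphi_r(G)=\max\{\varphi(H): H\text{ an induced subgraph of }G\}$. A b-$t$-atom is a graph $A$ whose vertex set can be partitioned into $t$ sets $D_1,\ldots,D_t$, each $D_i$ containing a special vertex $c_i$, such that each $D_i$ is independent with $|D_i|\le t$ and, for all $i\ne j$, $c_i$ has a neighbor in $D_j$; it is minimal if no proper induced subgraph of it is a b-$t$-atom. *)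

(* Defs.v *)
(* Simple graphs: a symmetric irreflexive relation e on a finType T.
   Induced subgraphs are represented by their vertex sets S : {set T}. *)
From mathcomp Require Import all_boot.
Set Implicit Arguments. Unset Strict Implicit. Unset Printing Implicit Defensive.

Section BColor.
Variables (T : finType) (e : rel T).

Definition simple_graph : Prop := symmetric e /\ irreflexive e.

(* Colors are natural numbers 1..k stored in 'I_(#|T|.+1); since a surjective
   k-coloring of S needs k <= #|S| <= #|T|, every k-coloring is representable. *)
Definition color := 'I_(#|T|.+1).

Definition is_bcoloring (S : {set T}) (k : nat) (c : {ffun T -> color}) : bool :=
  [&& [forall x in S, (0 < c x <= k)%N],
      [forall i : color, (0 < i <= k)%N ==> [exists x in S, c x == i]],
      [forall x in S, forall y in S, e x y ==> (c x != c y)] &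
      [forall i : color, (0 < i <= k)%N ==>
         [exists x in S, (c x == i) &&
            [forall j : color, ((0 < j <= k)%N && (j != i)) ==>
               [exists y in S, e x y && (c y == j)]]]]].

Definition b_colorable (S : {set T}) (k : nat) : bool :=
  [exists c : {ffun T -> color}, is_bcoloring S k c].

Definition bchrom (S : {set T}) : nat :=
  \max_(k < #|T|.+1 | b_colorable S k) k.

Definition bchrom_r (S : {set T}) : nat :=
  \max_(A in powerset S) bchrom A.

Definition b_atom (S : {set T}) (t : nat) : bool :=
  [exists D : {ffun 'I_t -> {set T}}, exists cv : {ffun 'I_t -> T},
    [&& [forall x, (x \in S) == [exists i, x \in D i]],
        [forall i, forall j, (i != j) ==> [disjoint D i & D j]],
        [forall i, cv i \in D i],
        [forall i, forall x in D i, forall y in D i, ~~ e x y],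
        [forall i, #|D i| <= t] &
        [forall i, forall j, (i != j) ==> [exists y in D j, e (cv i) y]]]].

Definition minimal_b_atom (S : {set T}) (t : nat) : bool :=
  b_atom S t && [forall A : {set T}, (A \proper S) ==> ~~ b_atom A t].

End BColor.

(* Main.v *)
Require Import Defs.
From mathcomp Require Import all_boot.
From Stdlib Require Import Classical Lia.
From mathcomp Require Import zify.
Set Implicit Arguments. Unset Strict Implicit. Unset Printing Implicit Defensive.


Ltac slia := repeat match goal with H : is_true (_ && _) |- _ => case/andP: H => ? ? end; repeat match goal with |- is_true (_ && _) => apply/andP; split end; lia.

Lemma ltS_le (i k n : nat) : 0 < i <= k -> k <= n -> i < n.+1.
Proof. slia. Qed.

Lemma card3 (T : finType) (a b c : T) : #|[set a; b; c]| <= 3.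
Proof.
apply: (leq_trans (leq_card_setU _ _)). rewrite cards2 cards1. by case: (_ != _).
Qed.

Section Main.
Variables (T : finType) (e : rel T).
Hypothesis esym : symmetric e.
Hypothesis eirr : irreflexive e.

Definition bcol (S : {set T}) (k : nat) (col : T -> nat) : Prop :=
  [/\ (forall x, x \in S -> 0 < col x <= k),
      (forall i, 0 < i <= k -> exists2 x, x \in S & col x = i),
      (forall x y, x \in S -> y \in S -> e x y -> col x != col y) &
      (forall i, 0 < i <= k -> exists x, [/\ x \in S, col x = i &
          forall j, 0 < j <= k -> j != i -> exists y, [/\ y \in S, e x y & col y = j]])].

Lemma bcol_of (S : {set T}) k : k <= #|T| -> b_colorable e S k ->
  exists col, bcol S k col.
Proof.
move=> kN /existsP [c /and4P [/forallP H1 /forallP H2 /forallP H3 /forallP H4]].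
exists (fun x => nat_of_ord (c x)); split.
- by move=> x xS; have := H1 x; rewrite xS.
- move=> i ik. have := H2 (inord i); rewrite inordK; last exact: ltS_le ik kN.
  rewrite ik /= => /existsP [x /andP [xS /eqP cx]]; exists x => //; by rewrite cx inordK //; exact: ltS_le ik kN.
- move=> x y xS yS exy; have := H3 x; rewrite xS => /forallP /(_ y); rewrite yS exy /=.
  by [].
- move=> i ik. have := H4 (inord i); rewrite inordK; last exact: ltS_le ik kN.
  rewrite ik /= => /existsP [x /andP [xS /andP [/eqP cx /forallP Hx]]].
  exists x; split => //; first by rewrite cx inordK //; exact: ltS_le ik kN.
  move=> j jk ji; have := Hx (inord j); rewrite inordK; last exact: ltS_le jk kN.
  have ji' : (inord j : color T) != inord i.
    by rewrite -(inj_eq val_inj) /= !inordK //; [exact: ltS_le ik kN | exact: ltS_le jk kN].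
  rewrite jk ji' /= => /existsP [y /andP [yS /andP [exy /eqP cy]]].
  exists y; split => //; rewrite cy inordK //; exact: ltS_le jk kN.
Qed.

Lemma of_bcol (S : {set T}) k col : k <= #|T| -> bcol S k col -> b_colorable e S k.
Proof.
move=> kN [H1 H2 H3 H4].
have cE : forall x, x \in S -> nat_of_ord (inord (col x) : color T) = col x.
  move=> x xS; rewrite inordK //; have := H1 x xS => /andP [_ h]; exact: leq_trans h kN.
apply/existsP; exists [ffun x => inord (col x) : color T].
apply/and4P; split.
- by apply/forallP => x; apply/implyP => xS; rewrite ffunE cE //; apply: H1.
- apply/forallP => i; apply/implyP => ik; have [x xS cx] := H2 _ ik.
  apply/existsP; exists x; rewrite xS ffunE /=; apply/eqP/val_inj; rewrite /= cE //.
- apply/forallP => x; apply/implyP => xS; apply/forallP => y; apply/implyP => yS.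
  apply/implyP => exy; rewrite !ffunE; apply/negP => /eqP /(congr1 val).
  by rewrite /= !cE // => /eqP; apply/negP; apply: H3.
- apply/forallP => i; apply/implyP => ik; have [x [xS cx Hx]] := H4 _ ik.
  apply/existsP; exists x; rewrite xS ffunE /=; apply/andP; split.
    by apply/eqP/val_inj; rewrite /= cE.
  apply/forallP => j; apply/implyP => /andP [jk ji].
  have [y [yS exy cy]] := Hx _ jk ji.
  apply/existsP; exists y; rewrite yS exy ffunE /=; apply/eqP/val_inj; rewrite /= cE //.
Qed.

Lemma bchrom_r_ge (S A : {set T}) k : A \subset S -> k <= #|T| -> b_colorable e A k ->
  k <= bchrom_r e S.
Proof.
move=> AS kN Hb; apply: (@leq_trans (bchrom e A)).
  by rewrite /bchrom; apply: (@leq_bigmax_cond _ _ (fun k : 'I_#|T|.+1 => nat_of_ord k) (Ordinal (kN : k < #|T|.+1))).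
rewrite /bchrom_r; apply: (@leq_bigmax_cond _ _ (fun A => bchrom e A) A).
by rewrite powersetE.
Qed.

Lemma bchrom_r_le (S : {set T}) m :
  (forall (A : {set T}) k, A \subset S -> k <= #|T| -> b_colorable e A k -> k <= m) ->
  bchrom_r e S <= m.
Proof.
move=> H; apply/bigmax_leqP => A; rewrite powersetE => AS.
apply/bigmax_leqP => k Hk; apply: H AS _ Hk; by rewrite -ltnS.
Qed.

Lemma bchrom_r_ex (S : {set T}) m : 0 < m -> m <= bchrom_r e S ->
  exists (A : {set T}) k col, [/\ A \subset S, m <= k, k <= #|T| & bcol A k col].
Proof.
move=> m0 Hm; apply: NNPP => Hn.
have : bchrom_r e S <= m.-1.
  apply: bchrom_r_le => A k AS kN Hb; rewrite leqNgt; apply/negP => mk.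
  have [col Hc] := bcol_of kN Hb; apply: Hn; exists A, k, col; split => //; slia.
slia.
Qed.


Lemma neq_col (col : T -> nat) a b : col a != col b -> a != b.
Proof. by apply: contraNneq => ->. Qed.

Lemma bcol_card (S : {set T}) k col : bcol S k col -> k <= #|S|.
Proof.
case: k => [//|k] [H1 H2 H3 H4].
have [x0 _ _] := H2 1 isT.
have Hp : forall i, i < k.+1 -> exists2 x, x \in S & col x = i.+1 /\ odflt x0 [pick x in S | col x == i.+1] = x.
  move=> i ik; case: pickP => [x /andP [xS /eqP cx]|Hn]; first by exists x.
  have [x xS cx] := H2 i.+1 ik; by have := Hn x; rewrite xS cx eqxx.
apply/card_geqP; exists [seq odflt x0 [pick x in S | col x == i.+1] | i <- iota 0 k.+1]; split.
- rewrite map_inj_in_uniq ?iota_uniq // => i j; rewrite !mem_iota /= !add0n => ik jk.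
  have [x _ [cx ->]] := Hp i ik; have [y _ [cy ->]] := Hp j jk.
  by move=> xy; move: cx cy; rewrite xy => -> [].
- by rewrite size_map size_iota.
- move=> x /mapP [i]; rewrite mem_iota add0n /= => ik ->.
  by have [y yS [_ ->]] := Hp i ik.
Qed.

Lemma edge_b (S : {set T}) (col : T -> nat) xi xj xl i j l :
  #|S| <= 4 -> xi \in S -> xj \in S -> xl \in S ->
  col xi = i -> col xj = j -> col xl = l -> i != j -> i != l -> j != l ->
  (exists y, [/\ y \in S, e xi y & col y = j]) ->
  (exists y, [/\ y \in S, e xj y & col y = i]) -> e xi xj.
Proof.
move=> S4 iS jS lS ci cj cl ij il jl [yi [yiS eyi cyi]] [yj [yjS eyj cyj]].
case: (classic (exists zj, [/\ zj \in S, col zj = j & zj != xj])) => [[zj [zjS czj nzj]]|Hj]; last first.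
  case: (eqVneq yi xj) => [<- //|nyi]; exfalso; apply: Hj; by exists yi.
case: (classic (exists zi, [/\ zi \in S, col zi = i & zi != xi])) => [[zi [ziS czi nzi]]|Hi]; last first.
  case: (eqVneq yj xi) => [<-|nyj]; first by rewrite esym.
  exfalso; apply: Hi; by exists yj.
have : 5 <= #|S|.
  apply/card_geqP; exists [:: xi; xj; xl; zi; zj]; split => //; last first.
    move=> x; rewrite !inE => /orP [/eqP->|/orP [/eqP->|/orP [/eqP->|/orP [/eqP->|/eqP->]]]] //.
  rewrite /= !inE !negb_or -!andbA.
  have nc : forall a b, col a != col b -> a != b by move=> a b; apply: neq_col.
  repeat (apply/andP; split) => //; try (by rewrite eq_sym); apply: nc;
   rewrite ?ci ?cj ?cl ?czi ?czj // eq_sym //.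
by move=> H; move: (leq_trans H S4).
Qed.


Lemma tri_of_bcol (S : {set T}) k col : bcol S k col -> 3 <= k -> #|S| <= 4 ->
  exists x y z, [/\ x \in S, y \in S, z \in S & [&& e x y, e y z & e x z]].
Proof.
move=> [H1 H2 H3 H4] k3 S4.
have [x1 [x1S c1 N1]] : exists x, _ := H4 1 ltac:(by slia).
have [x2 [x2S c2 N2]] : exists x, _ := H4 2 ltac:(by slia).
have [x3 [x3S c3 N3]] : exists x, _ := H4 3 ltac:(by slia).
exists x1, x2, x3; split => //; apply/and3P; split.
- apply: (edge_b S4 x1S x2S x3S c1 c2 c3) => //; [apply: N1 | apply: N2] => //; slia.
- apply: (edge_b S4 x2S x3S x1S c2 c3 c1) => //; [apply: N2 | apply: N3] => //; slia.
- apply: (edge_b S4 x1S x3S x2S c1 c3 c2) => //; [apply: N1 | apply: N3] => //; slia.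
Qed.

Lemma k4_of_bcol (S : {set T}) k col : bcol S k col -> 4 <= k -> #|S| <= 4 ->
  exists x y z w, [/\ x \in S, y \in S, z \in S, w \in S &
     [&& e x y, e x z, e x w, e y z, e y w & e z w]].
Proof.
move=> [H1 H2 H3 H4] k4 S4.
have [x1 [x1S c1 N1]] : exists x, _ := H4 1 ltac:(by slia).
have [x2 [x2S c2 N2]] : exists x, _ := H4 2 ltac:(by slia).
have [x3 [x3S c3 N3]] : exists x, _ := H4 3 ltac:(by slia).
have [x4 [x4S c4 N4]] : exists x, _ := H4 4 ltac:(by slia).
exists x1, x2, x3, x4; split => //; repeat (apply/andP; split).
- apply: (edge_b S4 x1S x2S x3S c1 c2 c3) => //; [apply: N1 | apply: N2] => //; slia.
- apply: (edge_b S4 x1S x3S x2S c1 c3 c2) => //; [apply: N1 | apply: N3] => //; slia.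
- apply: (edge_b S4 x1S x4S x2S c1 c4 c2) => //; [apply: N1 | apply: N4] => //; slia.
- apply: (edge_b S4 x2S x3S x1S c2 c3 c1) => //; [apply: N2 | apply: N3] => //; slia.
- apply: (edge_b S4 x2S x4S x1S c2 c4 c1) => //; [apply: N2 | apply: N4] => //; slia.
- apply: (edge_b S4 x3S x4S x1S c3 c4 c1) => //; [apply: N3 | apply: N4] => //; slia.
Qed.


Lemma clique_bcol (s : seq T) : uniq s ->
  (forall x y, x \in s -> y \in s -> x != y -> e x y) ->
  bcol [set x in s] (size s) (fun x => (index x s).+1).
Proof.
move=> us Hs; case: s us Hs => [|x0 s'] us Hs.
  split => [x|i|x y|i]; rewrite ?inE ?in_nil //; move=> /= H; exfalso; slia.
set s := x0 :: s' in us Hs *.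
have Hn : forall i, i < size s -> nth x0 s i \in s /\ index (nth x0 s i) s = i.
  by move=> i Hi; split; [apply: mem_nth | rewrite index_uniq].
split.
- by move=> x; rewrite inE ltnS index_mem andTb.
- move=> [//|i] Hi; have [h1 h2] := Hn i Hi; exists (nth x0 s i); by rewrite ?inE // h2.
- move=> x y; rewrite !in_set => xs ys exy; rewrite eqSS; apply/negP => /eqP Hxy.
  have : x = y by rewrite -(nth_index x0 xs) Hxy nth_index.
  by move=> xy; move: exy; rewrite xy eirr.
- move=> [//|i] Hi; have [h1 h2] := Hn i Hi; exists (nth x0 s i); split; rewrite ?in_set ?h2 //.
  move=> [//|j] Hj ji; have [g1 g2] := Hn j Hj; exists (nth x0 s j); split; rewrite ?in_set ?g2 //.
  apply: Hs => //; apply/negP => /eqP H.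
  have : index (nth x0 s i) s = index (nth x0 s j) s by rewrite H.
  by rewrite h2 g2 => H'; move: ji; rewrite H' eqxx.
Qed.


Lemma atom_bcol (S : {set T}) : b_atom e S 3 -> exists col, bcol S 3 col.
Proof.
move=> /existsP [D /existsP [cv /andP [/forallP h1 /andP [/forallP h2 /andP [/forallP h3
   /andP [/forallP h4 /andP [/forallP h5 /forallP h6]]]]]]].
pose col x := if [pick i | x \in D i] is Some i then (nat_of_ord i).+1 else 0.
have colD : forall i x, x \in D i -> col x = i.+1.
  move=> i x xi; rewrite /col; case: pickP => [j xj|H]; last by have := H i; rewrite xi.
  case: (eqVneq i j) => [->//|ij]; have := h2 i; move=> /forallP /(_ j); rewrite ij /= => d.
  by rewrite (disjointFr d xi) in xj.
have inS : forall x, x \in S -> exists i, x \in D i.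
  by move=> x; rewrite (eqP (h1 x)) => /existsP.
have DS : forall i x, x \in D i -> x \in S.
  by move=> i x xi; rewrite (eqP (h1 x)); apply/existsP; exists i.
have oK : forall i, 0 < i <= 3 -> nat_of_ord (inord i.-1 : 'I_3) = i.-1.
  by move=> i Hi; rewrite inordK //; slia.
exists col; split.
- move=> x /inS [i xi]; rewrite (colD _ _ xi); have := ltn_ord i; slia.
- move=> i Hi; exists (cv (inord i.-1)); first exact: DS (h3 _).
  rewrite (colD _ _ (h3 _)) oK //; slia.
- move=> x y /inS [i xi] /inS [j yj] exy; rewrite (colD _ _ xi) (colD _ _ yj) eqSS.
  apply/negP => /eqP /val_inj ij; subst j.
  by have := h4 i; move=> /forallP /(_ x); rewrite xi => /forallP /(_ y); rewrite yj exy.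
- move=> i Hi; exists (cv (inord i.-1)); split; first exact: DS (h3 _).
    rewrite (colD _ _ (h3 _)) oK //; slia.
  move=> j Hj ji; have := h6 (inord i.-1); move=> /forallP /(_ (inord j.-1)).
  have -> : (inord i.-1 : 'I_3) != inord j.-1.
    apply/negP => /eqP /(congr1 (@nat_of_ord 3)); rewrite !oK //; move: ji => /eqP; slia.
  move=> /existsP [y /andP [yj exy]]; exists y; split => //; first exact: DS yj.
  rewrite (colD _ _ yj) oK //; slia.
Qed.

Lemma atom_exists_min (S : {set T}) : b_atom e S 3 -> exists S', minimal_b_atom e S' 3.
Proof.
elim: {S}#|S| {-2}S (leqnn #|S|) => [|n IH] S Sn HS.
  exists S; rewrite /minimal_b_atom HS /=; apply/forallP => A; apply/implyP => AS.
  by have := proper_card AS; slia.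
case: (boolP [forall A : {set T}, (A \proper S) ==> ~~ b_atom e A 3]) => H.
  by exists S; rewrite /minimal_b_atom HS.
move: H; rewrite negb_forall => /existsP [A]; rewrite negb_imply negbK => /andP [AS HA].
apply: (IH A) => //; have := proper_card AS; slia.
Qed.

Lemma bcol_atom (S : {set T}) k col : bcol S k col -> 3 <= k -> exists S', b_atom e S' 3.
Proof.
move=> [H1 H2 H3 H4] k3.
have K1 : 0 < 1 <= k by slia.
have K2 : 0 < 2 <= k by slia.
have K3 : 0 < 3 <= k by slia.
have [x1 [x1S c1 N1]] : exists x, _ := H4 1 K1.
have [x2 [x2S c2 N2]] : exists x, _ := H4 2 K2.
have [x3 [x3S c3 N3]] : exists x, _ := H4 3 K3.
have [y12 [y12S e12 c12]] := N1 2 K2 isT.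
have [y13 [y13S e13 c13]] := N1 3 K3 isT.
have [y21 [y21S e21 c21]] := N2 1 K1 isT.
have [y23 [y23S e23 c23]] := N2 3 K3 isT.
have [y31 [y31S e31 c31]] := N3 1 K1 isT.
have [y32 [y32S e32 c32]] := N3 2 K2 isT.
pose D := [ffun i : 'I_3 => if val i == 0 then [set x1; y21; y31]
             else if val i == 1 then [set x2; y12; y32] else [set x3; y13; y23]].
pose cv := [ffun i : 'I_3 => if val i == 0 then x1 else if val i == 1 then x2 else x3].
have KD : forall i x, x \in D i -> x \in S /\ col x = i.+1.
  move=> [[|[|[|//]]] Hi] x; rewrite ffunE /= !inE => /orP [/orP [/eqP->|/eqP->]|/eqP->] //.
exists [set x | [exists i, x \in D i]]; apply/existsP; exists D; apply/existsP; exists cv.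
apply/and5P; split; last (apply/andP; split).
- by apply/forallP => x; rewrite in_set.
- apply/forallP => i; apply/forallP => j; apply/implyP => ij.
  rewrite -setI_eq0; apply: contraTT ij => /set0Pn [x]; rewrite inE => /andP [/KD [_ ci] /KD [_ cj]].
  rewrite negbK; apply/eqP/val_inj; rewrite ci in cj; by case: cj.
- apply/forallP => -[[|[|[|//]]] Hi]; by rewrite !ffunE /= !inE eqxx ?orbT.
- apply/forallP => i; apply/forallP => x; apply/implyP => /KD [xS cx].
  apply/forallP => y; apply/implyP => /KD [yS cy]; apply/negP => exy.
  by have := H3 _ _ xS yS exy; rewrite cx cy eqxx.
- apply/forallP => -[[|[|[|//]]] Hi]; by rewrite ffunE /= card3.
- apply/forallP => -[[|[|[|//]]] Hi]; apply/forallP => -[[|[|[|//]]] Hj];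
    apply/implyP; rewrite -(inj_eq val_inj) //= => _; rewrite !ffunE /=; apply/existsP.
  + by exists y12; rewrite !inE eqxx ?orbT e12.
  + by exists y13; rewrite !inE eqxx ?orbT e13.
  + by exists y21; rewrite !inE eqxx ?orbT e21.
  + by exists y23; rewrite !inE eqxx ?orbT e23.
  + by exists y31; rewrite !inE eqxx ?orbT e31.
  + by exists y32; rewrite !inE eqxx ?orbT e32.
Qed.

End Main.


Definition adjM (M : seq (seq bool)) i j := nth false (nth [::] M i) j.
Definition hasI n (p : nat -> bool) := has p (iota 0 n).
Definition triA M n v := hasI n (fun i => (i != v) && hasI n (fun j =>
  [&& j != v, adjM M i j & hasI n (fun k => [&& k != v, adjM M j k & adjM M i k])])).
Definition k4A M n v := hasI n (fun i => (i != v) && hasI n (fun j =>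
  [&& j != v, adjM M i j & hasI n (fun k => [&& k != v, adjM M i k, adjM M j k &
     hasI n (fun l => [&& l != v, adjM M i l, adjM M j l & adjM M k l])])])).
Definition k5A M n := hasI n (fun i => hasI n (fun j => adjM M i j && hasI n (fun k =>
  [&& adjM M i k, adjM M j k & hasI n (fun l => [&& adjM M i l, adjM M j l, adjM M k l &
     hasI n (fun m => [&& adjM M i m, adjM M j m, adjM M k m & adjM M l m])])]))).
Definition P12 M n := (all (triA M n) (iota 0 n) ==> k4A M n n) &&
                      (all (k4A M n) (iota 0 n) ==> k5A M n).
Definition mat n (r : nat -> nat -> bool) := [seq [seq r i j | j <- iota 0 n] | i <- iota 0 n].
Definition pairs n := [seq (i, j) | i <- iota 0 n, j <- iota i.+1 (n - i.+1)].
Definition relb (bs : seq bool) n i j :=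
  if i < j then nth false bs (index (i, j) (pairs n))
  else if j < i then nth false bs (index (j, i) (pairs n)) else false.
Fixpoint bits m := if m is m'.+1 then [seq b :: l | b <- [:: false; true], l <- bits m'] else [:: [::]].
Definition check n := all (fun bs => P12 (mat n (relb bs n)) n) (bits (size (pairs n))).


Lemma adjM_mat n r i j : i < n -> j < n -> adjM (mat n r) i j = r i j.
Proof.
move=> ilt jlt; rewrite /adjM /mat (nth_map 0) ?size_iota // nth_iota //.
by rewrite (nth_map 0) ?size_iota // nth_iota.
Qed.

Lemma mem_pairs n i j : i < j -> j < n -> (i, j) \in pairs n.
Proof.
move=> ij jn; apply/allpairsPdep; exists i, j; split => //; rewrite mem_iota;
  apply/andP; split; lia.
Qed.

Lemma bits_mem m l : size l = m -> l \in bits m.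
Proof.
elim: m l => [|m IH] [|b l] // [sl].
apply/allpairsPdep; exists b, l; split => //; [by case: b | exact: IH].
Qed.

Lemma check_P12 n r : check n ->
  (forall i j, i < n -> j < n -> r j i = r i j) -> (forall i, r i i = false) ->
  P12 (mat n r) n.
Proof.
move=> /allP H rs ri.
set bs := [seq r p.1 p.2 | p <- pairs n].
have : P12 (mat n (relb bs n)) n by apply: H; apply: bits_mem; rewrite size_map.
suff -> : mat n (relb bs n) = mat n r by [].
rewrite /mat; apply/eq_in_map => i; rewrite mem_iota add0n => ilt; apply/eq_in_map => j.
rewrite mem_iota add0n => jlt; rewrite /relb.
case: (ltngtP i j) => [ij|ji|<-]; last by rewrite ri.
- rewrite (nth_map (0, 0)) ?nth_index ?mem_pairs // index_mem mem_pairs //.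
- rewrite (nth_map (0, 0)) ?nth_index ?mem_pairs //=; first (apply: rs; lia).
  by rewrite index_mem mem_pairs.
Qed.

Lemma check4 : check 4. Proof. vm_compute. reflexivity. Qed.
Lemma check5 : check 5. Proof. vm_compute. reflexivity. Qed.


Section Tr.
Variables (T : finType) (e : rel T).
Hypothesis esym : symmetric e.
Hypothesis eirr : irreflexive e.

Definition triT (X : {set T}) := exists x y z,
  [/\ x \in X, y \in X, z \in X & [&& e x y, e y z & e x z]].
Definition k4T (X : {set T}) := exists x y z w, [/\ x \in X, y \in X, z \in X, w \in X &
     [&& e x y, e x z, e x w, e y z, e y w & e z w]].
Definition k5T := exists x y z w u,
  [&& e x y, e x z, e x w, e x u, e y z, e y w, e y u, e z w, e z u & e w u].

Lemma transfer (x0 : T) : check #|T| ->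
  ((forall v, triT (setT :\ v)) -> k4T setT) /\ ((forall v, k4T (setT :\ v)) -> k5T).
Proof.
move=> Hc; set s := enum T; set n := #|T|.
pose h i := nth x0 s i.
have sn : size s = n by rewrite /s /n cardT.
have hI : forall x, index x s < n by move=> x; rewrite -sn index_mem mem_enum.
have hK : forall x, h (index x s) = x by move=> x; rewrite /h nth_index // mem_enum.
have hN : forall x v, v < n -> x \in setT :\ h v -> index x s != v.
  move=> x v vn; rewrite !inE => /andP [xv _]; apply: contraNneq xv => <-; by rewrite hK.
have iI : forall i, i \in iota 0 n -> i < n by move=> i; rewrite mem_iota; lia.
have Iin : forall x, index x s \in iota 0 n by move=> x; rewrite mem_iota; have := hI x; lia.
pose r i j := e (h i) (h j).
have P : P12 (mat n r) n.
  apply: check_P12 => //; first by move=> i j _ _; rewrite /r esym.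
  by move=> i; rewrite /r eirr.
move: P => /andP [P1 P2]; split.
- move=> H; move: P1 => /implyP P1.
  have : k4A (mat n r) n n.
    apply: P1; apply/allP => v /iI vn; have [x [y [z [xX yX zX /and3P [exy eyz exz]]]]] := H (h v).
    apply/hasP; exists (index x s) => //; rewrite (hN _ _ vn xX) /=.
    apply/hasP; exists (index y s) => //; rewrite (hN _ _ vn yX) /= adjM_mat // /r !hK exy /=.
    apply/hasP; exists (index z s) => //; rewrite (hN _ _ vn zX) /= !adjM_mat // /r !hK eyz exz //.
  move=> /hasP [i /iI ilt /andP [_ /hasP [j /iI jlt /and3P [_ eij /hasP [k /iI klt
    /and4P [_ eik ejk /hasP [l /iI llt /and4P [_ eil ejl ekl]]]]]]]].
  rewrite !adjM_mat // /r in eij eik ejk eil ejl ekl.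
  exists (h i), (h j), (h k), (h l); rewrite !inE; split => //.
  by rewrite eij eik eil ejk ejl ekl.
- move=> H; move: P2 => /implyP P2.
  have : k5A (mat n r) n.
    apply: P2; apply/allP => v /iI vn.
    have [x [y [z [w [xX yX zX wX /andP [exy /andP [exz /andP [exw /andP [eyz /andP [eyw ezw]]]]]]]]]] := H (h v).
    apply/hasP; exists (index x s) => //; rewrite (hN _ _ vn xX) /=.
    apply/hasP; exists (index y s) => //; rewrite (hN _ _ vn yX) /= adjM_mat // /r !hK exy /=.
    apply/hasP; exists (index z s) => //; rewrite (hN _ _ vn zX) /= !adjM_mat // /r !hK exz eyz /=.
    apply/hasP; exists (index w s) => //; rewrite (hN _ _ vn wX) /= !adjM_mat // /r !hK exw eyw ezw //.
  move=> /hasP [i /iI ilt /hasP [j /iI jlt /andP [eij /hasP [k /iI klt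
    /and3P [eik ejk /hasP [l /iI llt /and4P [eil ejl ekl /hasP [m /iI mlt
    /and4P [eim ejm ekm elm]]]]]]]]].
  rewrite !adjM_mat // /r in eij eik ejk eil ejl ekl eim ejm ekm elm.
  exists (h i), (h j), (h k), (h l), (h m).
  by rewrite eij eik eil eim ejk ejl ejm ekl ekm elm.
Qed.

End Tr.


Ltac solve_pw H := move: H; rewrite /=; move=> H;
  repeat match goal with H : is_true (_ && _) |- _ => case/andP: H => ? ? end;
  repeat match goal with H : is_true (?f _ _) |- _ => rewrite H /=; clear H end.

Section M2.
Variables (T : finType) (e : rel T).
Hypothesis esym : symmetric e.
Hypothesis eirr : irreflexive e.

Lemma pw_adj s : pairwise e s -> forall x y, x \in s -> y \in s -> x != y -> e x y.
Proof.
elim: s => [//|a s IH]; rewrite pairwise_cons => /andP [/allP Ha Hs] x y; rewrite !inE.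
case/orP => [/eqP->|xs]; case/orP => [/eqP->|ys].
- by rewrite eqxx.
- by move=> _; apply: Ha.
- by move=> _; rewrite esym; apply: Ha.
- exact: IH.
Qed.

Lemma clique_ge (X : {set T}) s : pairwise e s -> {subset s <= X} ->
  size s <= bchrom_r e X.
Proof.
move=> pw sX.
have sN : size s <= #|T| by rewrite -(card_uniqP (pairwise_uniq eirr pw)); apply: max_card. apply: (@bchrom_r_ge _ _ _ [set x in s]) => //.
  by apply/subsetP => x; rewrite in_set; apply: sX.
have Hb := clique_bcol eirr (pairwise_uniq eirr pw) (pw_adj pw).
exact: of_bcol sN Hb.
Qed.

Lemma ge_ex (X : {set T}) m : 0 < m -> m <= bchrom_r e X ->
  exists (A : {set T}) k col, [/\ A \subset X, m <= k, k <= #|T| & bcol e A k col].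
Proof. exact: bchrom_r_ex. Qed.

End M2.

Theorem mainTheorem13 (T : finType) (e : rel T) :
  simple_graph e ->
  (4 <= #|T| <= 5)%N ->
  (exists x y : T, e x y) ->
  (forall v : T,
     bchrom_r e (setT :\ v) = (bchrom_r e setT + #|T| %/ 2 - 2)%N)
  <->
  ((exists a b c d : T,
      [&& e a b, e c d, a != c, a != d, b != c & b != d])
   /\ ~ (exists S : {set T}, minimal_b_atom e S 3)).
Proof.
move=> [esym eirr] /andP [n4 n5] [x0 [y0 e0]].
have Nc : #|T| = 4 \/ #|T| = 5 by lia.
have hd : forall p, p + #|T| %/ 2 - 2 = p by move=> p; case: Nc => ->; rewrite addnK.
have cs : forall v : T, #|setT :\ v| = #|T|.-1.
  by move=> v; have := cardsD1 v setT; rewrite cardsT in_setT; lia.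
have ne : forall x y : T, e x y -> x != y by move=> x y; apply: contraTneq => ->; rewrite eirr.
have le_edge : forall (X : {set T}) (x y : T), x \in X -> y \in X -> e x y -> 2 <= bchrom_r e X.
  move=> X x y xX yX exy; apply: (clique_ge esym eirr (s := [:: x; y])).
    by rewrite pairwise2.
  by move=> z; rewrite !inE => /orP [/eqP->|/eqP->].
have tri_ge : forall x y z : T, [&& e x y, e y z & e x z] -> 3 <= bchrom_r e setT.
  move=> x y z /and3P [exy eyz exz]; apply: (clique_ge esym eirr (s := [:: x; y; z])); last by move=> ?; rewrite in_setT.
  by rewrite /= exy exz eyz.
have edge_of : forall X : {set T}, 2 <= bchrom_r e X -> exists x y, [/\ x \in X, y \in X & e x y].
  move=> X /(ge_ex (isT : 0 < 2)) [A [k [col [AX k2 kN [H1 H2 H3 H4]]]]].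
  have K1 : 0 < 1 <= k by slia.
  have K2 : 0 < 2 <= k by slia.
  have [x [xA c1 Nx]] := H4 1 K1; have [y [yA exy _]] := Nx 2 K2 isT.
  by exists x, y; split => //; apply: (subsetP AX).
have chk : check #|T| by case: Nc => ->; [exact: check4 | exact: check5].
have [T1 T2] := transfer esym eirr x0 chk.
split.
- move=> H; have {}H : forall v : T, bchrom_r e (setT :\ v) = bchrom_r e setT.
    by move=> v; rewrite H hd.
  set p := bchrom_r e setT in H *.
  have p2 : p <= 2.
    rewrite leqNgt; apply/negP => p3.
    have trv : forall v : T, triT e (setT :\ v).
      move=> v; have : 3 <= bchrom_r e (setT :\ v) by rewrite H.
      move=> /(ge_ex (isT : 0 < 3)) [A [k [col [AX k3 kN Hc]]]].
      have A4 : #|A| <= 4 by have := subset_leq_card AX; rewrite cs; lia.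
      have [x [y [z [xA yA zA Hxyz]]]] := tri_of_bcol esym Hc k3 A4.
      by exists x, y, z; split => //; apply: (subsetP AX).
    have [x [y [z [w [_ _ _ _ Hk]]]]] := T1 trv.
    have p4 : 4 <= p.
      apply: (clique_ge esym eirr (s := [:: x; y; z; w])); last by move=> ?; rewrite in_setT.
      by solve_pw Hk.
    have k4v : forall v : T, k4T e (setT :\ v).
      move=> v; have : 4 <= bchrom_r e (setT :\ v) by rewrite H.
      move=> /(ge_ex (isT : 0 < 4)) [A [k [col [AX k4 kN Hc]]]].
      have A4 : #|A| <= #|T|.-1 by have := subset_leq_card AX; rewrite cs.
      have := bcol_card Hc => kA.
      have A4' : #|A| <= 4 by lia.
      have [a [b [c [d [aA bA cA dA Habcd]]]]] := k4_of_bcol esym Hc k4 A4'.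
      by exists a, b, c, d; split => //; apply: (subsetP AX).
    have [a [b [c [d [f Hk5]]]]] := T2 k4v.
    have p5 : 5 <= p.
      apply: (clique_ge esym eirr (s := [:: a; b; c; d; f])); last by move=> ?; rewrite in_setT.
      by solve_pw Hk5.
    have : 5 <= bchrom_r e (setT :\ x0) by rewrite H.
    move=> /(ge_ex (isT : 0 < 5)) [A [k [col [AX k5 kN Hc]]]].
    have := subset_leq_card AX; rewrite cs; have := bcol_card Hc => h1 h2.
    clear -h1 h2 k5 n5; lia.
  split; last first.
    move=> [S /andP [HS _]]; have [col Hc] := atom_bcol HS.
    have Hb := of_bcol (leq_trans (isT : 3 <= 4) n4) Hc.
    have := bchrom_r_ge (subsetT S) (leq_trans (isT : 3 <= 4) n4) Hb; rewrite -/p; lia.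
  apply: NNPP => Hn.
  have meet : forall a b c d : T, e a b -> e c d -> (a == c) || (a == d) || (b == c) || (b == d).
    move=> a b c d eab ecd.
    case: (eqVneq a c) => [_|ac]; first by rewrite ?orbT.
    case: (eqVneq a d) => [_|ad]; first by rewrite ?orbT.
    case: (eqVneq b c) => [_|bc]; first by rewrite ?orbT.
    case: (eqVneq b d) => [_|bd]; first by rewrite ?orbT.
    by exfalso; apply: Hn; exists a, b, c, d; rewrite eab ecd ac ad bc bd.
  have p2' : 2 <= p by apply: (le_edge setT x0 y0); rewrite ?in_setT.
  have [u [w [uX wX euw]]] := edge_of (setT :\ x0) ltac:(by rewrite H).
  have [w1 [e1 n1]] : exists w1, e y0 w1 /\ w1 != x0.
    move: uX wX; rewrite !inE !andbT => ux wx.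
    have := meet _ _ _ _ e0 euw; rewrite (eq_sym x0 u) (negbTE ux) (eq_sym x0 w) (negbTE wx) /=.
    case/orP => /eqP yu; [by exists w; rewrite yu | by exists u; rewrite yu esym].
  have [u' [w' [uX' wX' euw']]] := edge_of (setT :\ y0) ltac:(by rewrite H).
  have [w2 [e2 n2]] : exists w2, e x0 w2 /\ w2 != y0.
    move: uX' wX'; rewrite !inE !andbT => ux wx.
    have := meet _ _ _ _ e0 euw'; rewrite (eq_sym y0 u') (negbTE ux) (eq_sym y0 w') (negbTE wx) !orbF.
    case/orP => /eqP yu; [by exists w'; rewrite yu | by exists u'; rewrite yu esym].
  have := meet _ _ _ _ e1 e2.
  rewrite eq_sym (negbTE (ne _ _ e0)) (eq_sym y0 w2) (negbTE n2) (negbTE n1) /= => /eqP E12.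
  have := tri_ge x0 y0 w1; rewrite e0 e1 E12 e2 /= => /(_ isT); lia.
- move=> [[a [b [c [d /andP [eab /andP [ecd /andP [ac /andP [ad /andP [bc bd]]]]]]]]] Hna] v.
  have noatom : forall S : {set T}, ~~ b_atom e S 3.
    by move=> S; apply/negP => HS; apply: Hna; exact: atom_exists_min HS.
  have le2 : forall X : {set T}, bchrom_r e X <= 2.
    move=> X; apply: bchrom_r_le => A k _ kN Hb; rewrite leqNgt; apply/negP => k3.
    have [col Hc] := bcol_of kN Hb; have [S' HS'] := bcol_atom Hc k3.
    by have := noatom S'; rewrite HS'.
  have E1 : bchrom_r e (setT :\ v) = 2.
    apply/eqP; rewrite eqn_leq le2 /=.
    case: (eqVneq v a) => [va|va]; last case: (eqVneq v b) => [vb|vb].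
    + apply: (le_edge _ c d) => //; rewrite !inE andbT; [rewrite eq_sym va // | rewrite eq_sym va //].
    + apply: (le_edge _ c d) => //; rewrite !inE andbT; [rewrite eq_sym vb // | rewrite eq_sym vb //].
    + apply: (le_edge _ a b) => //; rewrite !inE andbT eq_sym //.
  have E2 : bchrom_r e setT = 2.
    by apply/eqP; rewrite eqn_leq le2 /=; apply: (le_edge _ a b); rewrite ?in_setT.
  by rewrite hd E1 E2.
Qed.
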